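(* Let $n$ be an integer with $1\le n\le d'-2$ and let $\{h_i\}_{i=0}^{n+1}$ be a sequence in $\mathbb F$ such that (i) $h_{i+2}-h_{i-1}=(q^2+1+q^{-2})(h_{i+1}-h_i)$ for all $i=1,2,\dots,n-1$, and (ii) there are integers $0\le j<k<\ell\le n+1$ with $h_j=h_k=h_\ell=0$. Then $h_i=0$ for all $i=0,1,\dots,n+1$.
   Context: $\mathbb F$ is an algebraically closed field and $q\in\mathbb F^\times$ is a root of unity of order $d\notin\{1,2,4\}$; $d'=d$ if $d$ is odd and $d'=d/2$ if $d$ is even (the order of $q^2$). *)

(* Defs.v *)
From HB Require Import structures.
From mathcomp Require Import all_boot all_order all_algebra.
Set Implicit Arguments. Unset Strict Implicit. Unset Printing Implicit Defensive.
Import GRing.Theory.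

(* d' : the order of q^2 when q has order d: d if d is odd, d/2 if d is even *)
Definition dprime (d : nat) : nat := if odd d then d else d./2.

(* Main.v *)
Require Import Defs.
From HB Require Import structures.
From mathcomp Require Import all_boot all_order all_algebra.
From mathcomp Require Import ring zify.
Import GRing.Theory.
Local Open Scope ring_scope.

Lemma distinct_pow (F : closedFieldType) (q : F) (d : nat)
  (hq : d.-primitive_root q) (j k : nat) :
  (j < k)%N -> (k < dprime d)%N -> q ^+ 2 ^+ j != q ^+ 2 ^+ k.
Proof.
move=> hjk hk; rewrite -!exprM (eq_prim_root_expr hq) eq_sym eqn_mod_dvd; last lia.
have -> : (2 * k - 2 * j = 2 * (k - j))%N by lia.
move: hk; rewrite /dprime; case: ifP => hodd hk.
- rewrite Gauss_dvdr; last by rewrite coprime_sym prime_coprime // dvdn2 hodd.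
  apply/negP => /dvdn_leq; lia.
- have hd : d = (2 * d./2)%N by rewrite -[in LHS](odd_double_half d) hodd /= -mul2n.
  rewrite hd dvdn_pmul2l //.
  apply/negP => /dvdn_leq; lia.
Qed.

Lemma quad_zero (F : fieldType) (a b c x y z : F) :
  x != y -> y != z -> x != z ->
  a + b * x + c * x ^+ 2 = 0 -> a + b * y + c * y ^+ 2 = 0 ->
  a + b * z + c * z ^+ 2 = 0 -> [/\ a = 0, b = 0 & c = 0].
Proof.
move=> nxy nyz nxz ex ey ez.
have hc : c * ((x - y) * (y - z) * (z - x)) = 0.
  have -> : c * ((x - y) * (y - z) * (z - x)) =
    - ((a + b * x + c * x ^+ 2) * (y - z) + (a + b * y + c * y ^+ 2) * (z - x)
       + (a + b * z + c * z ^+ 2) * (x - y)) by ring.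
  by rewrite ex ey ez; ring.
have c0 : c = 0.
  move/eqP: hc; rewrite !mulf_eq0 !subr_eq0 (negbTE nxy) (negbTE nyz) [z == x]eq_sym (negbTE nxz).
  by rewrite !orbF => /eqP.
have hb : b * (x - y) = 0.
  have -> : b * (x - y) = (a + b * x + c * x ^+ 2) - (a + b * y + c * y ^+ 2) - c * (x^+2 - y^+2) by ring.
  by rewrite ex ey c0; ring.
have b0 : b = 0.
  by move/eqP: hb; rewrite mulf_eq0 subr_eq0 (negbTE nxy) orbF => /eqP.
split=> //; by move: ex; rewrite b0 c0; rewrite !mul0r !addr0.
Qed.

Theorem lemma4p2 (F : closedFieldType) (q : F) (d : nat)
  (hq : d.-primitive_root q) (hd : (d \notin [:: 1%N; 2%N; 4%N]))
  (n : nat) (hn1 : (1 <= n)%N) (hn2 : (n + 2 <= dprime d)%N)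
  (h : nat -> F)
  (hrec : forall i : nat, (1 <= i)%N -> (i <= n.-1)%N ->
     h i.+2 - h i.-1 = (q ^+ 2 + 1 + q ^- 2) * (h i.+1 - h i))
  (hzero : exists j k l : nat,
     [/\ (j < k)%N, (k < l)%N, (l <= n.+1)%N & [/\ h j = 0, h k = 0 & h l = 0]]) :
  forall i : nat, (i <= n.+1)%N -> h i = 0.
Proof.
set r := q ^+ 2.
have dist : forall j k, (j < k)%N -> (k <= n.+1)%N -> r ^+ j != r ^+ k.
  move=> j k hjk hk; have hk2 : (k < dprime d)%N by lia.
  exact: (@distinct_pow F q d hq j k hjk hk2).
have r1 : r - 1 != 0.
  have := dist 0%N 1%N isT; rewrite expr0 expr1 subr_eq0 eq_sym; apply; lia.
have r2 : r ^+ 2 - 1 != 0.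
  have := dist 0%N 2%N isT; rewrite expr0 subr_eq0 eq_sym; apply; lia.
have r21 : r ^+ 2 - r != 0.
  have := dist 1%N 2%N isT; rewrite expr1 subr_eq0 eq_sym; apply; lia.
have r0 : r != 0.
  apply/eqP => r0; move: r21; rewrite r0 expr0n subrr eqxx; done.
have rm0 : forall m, r ^+ m != 0 by move=> m; rewrite expf_neq0.
pose t (a b c : F) (i : nat) := a / r ^+ i + b + c * r ^+ i.
have trec : forall a b c m, t a b c m.+3 - t a b c m =
    (r + 1 + r^-1) * (t a b c m.+2 - t a b c m.+1).
  move=> a b c m; rewrite /t !exprS.
  have := rm0 m; move: (r ^+ m) => u u0.
  by field; rewrite u0 r0.
pose v0 := h 0%N; pose v1 := r * h 1%N; pose v2 := r ^+ 2 * h 2%N.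
pose d1 := (v1 - v0) / (r - 1).
pose d2 := ((v2 - v1) / (r ^+ 2 - r) - d1) / (r ^+ 2 - 1).
pose c := d2; pose b := d1 - d2 * (1 + r); pose a := v0 - d1 + d2 * r.
have main : forall m, (m.+2 <= n.+1)%N ->
   [/\ h m = t a b c m, h m.+1 = t a b c m.+1 & h m.+2 = t a b c m.+2].
  elim=> [|m IH] hm.
    rewrite /t /a /b /c /d2 /d1 /v0 /v1 /v2 /= !expr0 !expr1.
    by split; field; rewrite ?r0 ?r1 ?r2 ?r21 ?oner_eq0.
  have [e0 e1 e2] := IH ltac:(lia).
  split=> //.
  have := hrec m.+1 isT ltac:(lia); rewrite /= => hr.
  have -> : h m.+3 = h m + (q ^+ 2 + 1 + q ^- 2) * (h m.+2 - h m.+1).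
    by rewrite -hr; ring.
  have -> : t a b c m.+3 = t a b c m + (r + 1 + r^-1) * (t a b c m.+2 - t a b c m.+1).
    by rewrite -trec; ring.
  by rewrite e0 e1 e2.
have hall : forall i, (i <= n.+1)%N -> h i = t a b c i.
  move=> i hi; case: (ltnP i 3) => hi3.
    have [e0 e1 e2] := main 0%N ltac:(lia).
    by case: i hi hi3 => [|[|[|]]].
  have [_ _ e] := main (i - 2)%N ltac:(lia).
  by have -> : i = (i - 2).+2 by lia.
have tz : forall i, t a b c i = 0 -> a + b * r ^+ i + c * (r ^+ i) ^+ 2 = 0.
  move=> i ti.
  have := rm0 i; move: ti; rewrite /t; move: (r ^+ i) => u ti u0.
  have -> : a + b * u + c * u ^+ 2 = u * (a / u + b + c * u) by field.
  by rewrite ti mulr0.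
case: hzero => j [k [l [hjk hkl hl [zj zk zl]]]].
have [a0 b0 c0] := @quad_zero _ _ _ _ _ _ _ (dist j k hjk ltac:(lia)) (dist k l hkl hl)
  (dist j l ltac:(lia) hl) (tz j ltac:(by rewrite -hall ?zj //; lia))
  (tz k ltac:(by rewrite -hall ?zk //; lia)) (tz l ltac:(by rewrite -hall ?zl //; lia)).
move=> i hi; rewrite hall // /t a0 b0 c0; ring.
Qed.
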